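(* Let $d\ge 1$ and let $h:\mathbb{R}^d\to\mathbb{R}$ be a continuous, integrable ($\int_{\mathbb{R}^d}|h(\tau)|\,d\tau<\infty$), positive semi-definite function such that $h(\tau)>0$ for all $\tau\in\mathbb{R}^d$. Consider the family $\mathcal{K}_h$ of all functions of the form $$k_K(\tau)=\sum_{k=1}^{K}\alpha_k\, h(\tau\odot\gamma_k)\cos(2\pi\,\omega_k^T\tau),\qquad \tau\in\mathbb{R}^d,$$ where $K\in\mathbb{N}^*=\{1,2,\dots\}$, $\alpha_k\in\mathbb{R}$, $\omega_k\in[0,\infty)^d$ and $\gamma_k\in(0,\infty)^d$. Then $\mathcal{K}_h$ is dense in the set of stationary real-valued kernels on $\mathbb{R}^d$ with respect to pointwise convergence: for every continuous positive semi-definite function $k:\mathbb{R}^d\to\mathbb{R}$ there is a sequence $(k^{(n)})_{n\ge1}$ of elements of $\mathcal{K}_h$ with $k^{(n)}(\tau)\to k(\tau)$ for every $\tau\in\mathbb{R}^d$. *)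

(* Defs.v *)
From mathcomp Require Import all_boot.
From Stdlib Require Import Reals.
Open Scope R_scope.

Definition vec (d : nat) := 'I_d -> R.

Definition sumR (n : nat) (f : nat -> R) : R := \big[Rplus/0]_(0 <= i < n) f i.

Definition dot {d} (x y : vec d) : R := \big[Rplus/0]_(i < d) (x i * y i).
Definition vsub {d} (x y : vec d) : vec d := fun i => x i - y i.
Definition vopp {d} (x : vec d) : vec d := fun i => - x i.
Definition hadamard {d} (x y : vec d) : vec d := fun i => x i * y i.

(* continuity on R^d (sup-norm, which induces the usual topology) *)
Definition cont_Rd {d} (f : vec d -> R) : Prop :=
  forall x eps, 0 < eps -> exists delta, 0 < delta /\
    forall y, (forall i, Rabs (y i - x i) < delta) -> Rabs (f y - f x) < eps.

Definition psd_fun {d} (f : vec d -> R) : Prop :=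
  (forall x, f (vopp x) = f x) /\
  forall (n : nat) (xs : nat -> vec d) (c : nat -> R),
    0 <= sumR n (fun i => sumR n (fun j => c i * c j * f (vsub (xs i) (xs j)))).

(* Iterated Riemann integral over the cube [-r,r]^m of the first m
   coordinates of g : (nat -> R) -> R, the remaining coordinates being 0.
   box_int m r g I  means that this iterated integral exists and equals I. *)
Fixpoint box_int (m : nat) (r : R) (g : (nat -> R) -> R) (I : R) : Prop :=
  match m with
  | O => I = g (fun _ => 0)
  | S m' => exists G : R -> R,
      (forall x, box_int m' r
          (fun v => g (fun j => if Nat.eqb j m' then x else v j)) (G x)) /\
      exists pr : Riemann_integrable G (- r) r, RiemannInt pr = I
  end.

Definition of_nat_vec {d} (v : nat -> R) : vec d := fun i => v (nat_of_ord i).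

(* Lebesgue integrability of a continuous f on R^d: the integrals of |f|
   over the cubes [-r,r]^d are uniformly bounded. *)
Definition integrable_Rd {d} (f : vec d -> R) : Prop :=
  exists M, forall r, 0 < r -> exists I,
    box_int d r (fun v => Rabs (f (of_nat_vec v))) I /\ I <= M.

Definition in_K {d} (h : vec d -> R) (f : vec d -> R) : Prop :=
  exists (K : nat) (alpha : nat -> R) (omega gamma : nat -> vec d),
    (1 <= K)%nat /\
    (forall k i, 0 <= omega k i) /\ (forall k i, 0 < gamma k i) /\
    forall tau, f tau =
      sumR K (fun k => alpha k * h (hadamard tau (gamma k))
                        * cos (2 * PI * dot (omega k) tau)).

(* Main.v *)
Require Import Defs.
From HB Require Import structures.
From mathcomp Require Import all_boot.
From Stdlib Require Import Reals Lra Lia FunctionalExtensionality ClassicalEpsilon Classical.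
Open Scope R_scope.

Lemma Rplus_assoc' : associative Rplus. Proof. move=> *; ring. Qed.
Lemma Rmult_assoc' : associative Rmult. Proof. move=> *; ring. Qed.
HB.instance Definition _ := Monoid.isComLaw.Build R 0 Rplus Rplus_assoc' Rplus_comm Rplus_0_l.
HB.instance Definition _ := Monoid.isComLaw.Build R 1 Rmult Rmult_assoc' Rmult_comm Rmult_1_l.
HB.instance Definition _ := Monoid.isMulLaw.Build R 0 Rmult Rmult_0_l Rmult_0_r.
HB.instance Definition _ := Monoid.isAddLaw.Build R Rmult Rplus Rmult_plus_distr_r Rmult_plus_distr_l.

Lemma sumR_scal n c f : sumR n (fun i => c * f i) = c * sumR n f.
Proof. by rewrite /sumR big_distrr. Qed.

Lemma sumR_cat K1 K2 f :
  sumR (K1 + K2) f = sumR K1 f + sumR K2 (fun i => f (i + K1)%nat).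
Proof.
rewrite /sumR (@big_cat_nat _ _ _ K1 0 (K1+K2) _ _ (leq0n K1) (leq_addr K2 K1)) /=; congr (Rplus _ _).
by rewrite -{1}(add0n K1) big_addn addKn.
Qed.

Lemma sumR_ext n f g : (forall i, (i < n)%nat -> f i = g i) -> sumR n f = sumR n g.
Proof. move=> H; rewrite /sumR; apply: eq_big_nat => i /andP[_ Hi]; exact: H. Qed.

Lemma sumR1 f : sumR 1 f = f 0%nat.
Proof. by rewrite /sumR big_nat1. Qed.

Lemma Rabs_half x : Rabs (x/2) = Rabs x / 2.
Proof. unfold Rabs; destruct (Rcase_abs (x/2)), (Rcase_abs x); lra. Qed.

Lemma Rabs_R2 : Rabs 2 = 2.
Proof. rewrite Rabs_pos_eq //; lra. Qed.

Lemma abs_sin_pos x : 0 <= x -> Rabs (sin x) <= x.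
Proof.
move=> Hx. have B := SIN_bound x.
destruct (Rle_dec 1 x). { apply Rabs_le; lra. }
destruct (Req_dec x 0) as [->|Hx0]. { rewrite sin_0 Rabs_R0; lra. }
have P : 0 < sin x. { apply: sin_gt_0; [lra|]. have := PI2_1; lra. }
have := sin_lt_x x ltac:(lra). rewrite Rabs_pos_eq; lra.
Qed.

Lemma abs_sin x : Rabs (sin x) <= Rabs x.
Proof.
destruct (Rle_dec 0 x).
- rewrite (Rabs_pos_eq x) //; exact: abs_sin_pos.
- rewrite -Rabs_Ropp -sin_neg (Rabs_left x); [|lra].
  apply abs_sin_pos; lra.
Qed.

Lemma vsin v : Rabs (v - sin v) <= Rabs v ^ 3 / 2.
Proof.
have [c [Hc Hcb]] := MVT_abs (fun x => x - sin x) (fun x => 1 - cos x) 0 v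
  (fun c _ => derivable_pt_lim_minus _ _ _ _ _ (derivable_pt_lim_id c) (derivable_pt_lim_sin c)).
rewrite sin_0 Rminus_0_r Rminus_0_r in Hc. rewrite Hc.
have Hcv : Rabs c <= Rabs v.
{ unfold Rmin, Rmax in Hcb; destruct (Rle_dec 0 v);
  [rewrite (Rabs_pos_eq v) // Rabs_pos_eq; lra|
   rewrite (Rabs_left v) ?Rabs_left1; lra]. }
have E : 1 - cos c = 2 * sin (c/2) ^ 2.
{ rewrite {1}(_ : c = 2 * (c/2)); last field. rewrite cos_2a_sin. ring. }
rewrite E.
have := abs_sin (c/2). rewrite Rabs_half => A.
have B : 0 <= Rabs (sin (c/2)) by apply Rabs_pos.
rewrite Rabs_mult Rabs_R2 -RPow_abs.
have C : 0 <= Rabs c by apply Rabs_pos.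
have D : 0 <= Rabs v by apply Rabs_pos.
have : Rabs (sin (c/2)) ^ 2 <= (Rabs c / 2) ^ 2 by apply pow_incr; lra.
intro F.
have G : (Rabs c / 2)^2 <= (Rabs v / 2)^2 by apply pow_incr; lra.
have : 0 <= Rabs (sin (c/2)) ^2 by apply pow_le.
intro H. rewrite Rminus_0_r.
apply: Rle_trans (_ : 2 * (Rabs v / 2) ^ 2 * Rabs v <= _); last by right; field.
apply Rmult_le_compat_r => //; lra.
Qed.

Lemma trig2 a u : Rabs (cos (a + 2*u) - 2 * cos (a + u) + cos a + u^2 * cos a) <= Rabs u ^ 3 + u^4.
Proof.
set s := sin (u/2).
have E1 : cos (a + 2*u) + cos a = 2 * cos (a+u) * cos u.
{ rewrite form1 (_ : (a + 2*u - a)/2 = u); last field. rewrite (_ : (a + 2*u + a)/2 = a + u); last field. ring. }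
have E2 : cos u = 1 - 2 * s^2.
{ rewrite /s {1}(_ : u = 2 * (u/2)); last field. rewrite cos_2a_sin. ring. }
have E3 : cos a - cos (a+u) = -2 * sin (-u/2) * sin ((2*a+u)/2).
{ rewrite form2 (_ : (a - (a + u))/2 = -u/2); last field. rewrite (_ : (a + (a + u))/2 = (2*a+u)/2); last field. ring. }
have -> : cos (a + 2*u) - 2 * cos (a + u) + cos a + u^2 * cos a
   = cos a * ((u - 2*s) * (u + 2*s)) + 4 * s^2 * (cos a - cos (a+u)).
{ have : cos (a + 2*u) = 2 * cos (a+u) * cos u - cos a by lra.
  move=> ->; rewrite E2; ring. }
rewrite E3.
have A1 : Rabs (u - 2*s) <= Rabs u ^ 3 / 8.
{ have := vsin (u/2). rewrite -/s Rabs_half.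
  rewrite (_ : u - 2*s = 2 * (u/2 - s)); last field. rewrite Rabs_mult Rabs_R2. rewrite (_ : (Rabs u / 2)^3/2 = Rabs u ^3/16); [lra|field]. }
have A2 : Rabs s <= Rabs u / 2.
{ have := abs_sin (u/2). rewrite Rabs_half /s; lra. }
have A3 : Rabs (sin (-u/2)) <= Rabs u / 2.
{ have := abs_sin (-u/2). rewrite Rabs_half Rabs_Ropp; lra. }
have B1 := COS_bound a. have B2 := SIN_bound ((2*a+u)/2).
have P1 : Rabs (cos a) <= 1 by apply Rabs_le; lra.
have P2 : Rabs (sin ((2*a+u)/2)) <= 1 by apply Rabs_le; lra.
have Q1 : Rabs (u + 2*s) <= 2 * Rabs u.
{ apply: Rle_trans (Rabs_triang _ _) _. rewrite Rabs_mult Rabs_R2; lra. }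
have Z1 := Rabs_pos u. have Z2 := Rabs_pos s. have Z3 := Rabs_pos (cos a).
have Z4 := Rabs_pos (u - 2*s). have Z5 := Rabs_pos (u + 2*s).
have Z6 := Rabs_pos (sin (-u/2)). have Z7 := Rabs_pos (sin ((2 * a + u) / 2)).
have T1 : Rabs (cos a * ((u - 2 * s) * (u + 2 * s))) <= Rabs u ^ 3 / 8 * (2 * Rabs u).
{ rewrite !Rabs_mult.
  apply: Rle_trans (Rmult_le_compat_r _ _ _ _ P1) _; first nra.
  rewrite Rmult_1_l. apply Rmult_le_compat; auto. }
have T2 : Rabs (4 * s^2 * (-2 * sin (- u / 2) * sin ((2 * a + u) / 2)))
   <= 4 * (Rabs u / 2)^2 * (2 * (Rabs u / 2) * 1).
{ rewrite Rabs_mult (Rabs_pos_eq (4 * s^2)); last nra.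
  rewrite !Rabs_mult (Rabs_left (-2)); last lra.
  have S2 : s^2 <= (Rabs u / 2)^2. { rewrite -pow2_abs. apply pow_incr. lra. }
  rewrite (_ : - (-2) = 2); last ring.
  apply Rmult_le_compat; [nra|nra|nra|]. apply Rmult_le_compat; [nra|lra|lra|lra]. }
have U4 : u^4 = Rabs u ^ 4.
{ rewrite (_ : u^4 = (u^2)^2); last ring. rewrite -(pow2_abs u); ring. }
apply: Rle_trans (Rabs_triang _ _) _. rewrite U4. nra.
Qed.

Definition inC {d} (m : R) (t : vec d) := forall i, Rabs (t i) <= m.

Definition bern n j x := C n j * x ^ j * (1 - x) ^ (n - j).

Lemma C_ge0 n j : 0 <= C n j.
Proof.
rewrite /C; apply: Rlt_le; apply: Rdiv_lt_0_compat; first exact: INR_fact_lt_0.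
apply: Rmult_lt_0_compat; exact: INR_fact_lt_0.
Qed.

Lemma bern_ge0 n j x : 0 <= x <= 1 -> 0 <= bern n j x.
Proof.
move=> Hx; rewrite /bern; apply: Rmult_le_pos; [apply: Rmult_le_pos|]; try apply: pow_le; try lra.
exact: C_ge0.
Qed.

Lemma C_shift n j : INR (S j) * C (S n) (S j) = INR (S n) * C n j.
Proof.
rewrite /C (_ : (S n - S j)%coq_nat = (n - j)%coq_nat) //.
rewrite !fact_simpl !mult_INR.
have := INR_fact_neq_0 j; have := INR_fact_neq_0 (n - j)%coq_nat.
have : INR (S j) <> 0 by apply: not_0_INR.
move=> *; field; repeat split => //.
Qed.

Lemma sum_ord_f (F : nat -> R) n : \big[Rplus/0]_(j < n.+1) F j = sum_f_R0 F n.
Proof.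
elim: n => [|n IH]; first by rewrite big_ord_recr big_ord0 /=; ring.
by rewrite big_ord_recr /= IH.
Qed.

Lemma bern_sum n x : sum_f_R0 (fun j => bern n j x) n = 1.
Proof.
have := binomial x (1 - x) n.
rewrite (_ : x + (1 - x) = 1); last ring. rewrite pow1 => ->.
apply: sum_eq => i _; by rewrite /bern.
Qed.

Lemma bern_m1 n x : (1 <= n)%nat ->
  sum_f_R0 (fun j => INR j * bern n j x) n = INR n * x.
Proof.
case: n => [//|n] _.
rewrite decomp_sum; last lia.
change (INR 0) with 0; change (Nat.pred (S n)) with n; rewrite Rmult_0_l Rplus_0_l.
rewrite (sum_eq _ (fun i => bern n i x * (INR (S n) * x))).
- by rewrite -scal_sum bern_sum; ring.
- move=> i Hi; rewrite /bern.
  rewrite (_ : (S n - S i)%nat = (n - i)%nat) //.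
  change (x ^ S i) with (x * x ^ i).
  rewrite (_ : INR (S i) * (C (S n) (S i) * (x * x ^ i) * (1 - x) ^ (n - i))
     = (INR (S i) * C (S n) (S i)) * (x * x ^ i) * (1 - x) ^ (n - i)); last ring.
  rewrite C_shift; ring.
Qed.

Lemma bern_m2 n x : (2 <= n)%nat ->
  sum_f_R0 (fun j => INR j * (INR j - 1) * bern n j x) n = INR n * (INR n - 1) * x ^ 2.
Proof.
case: n => [//|[//|n]] _.
rewrite decomp_sum; last lia.
change (INR 0) with 0; change (Nat.pred (S (S n))) with (S n); rewrite !Rmult_0_l Rplus_0_l.
rewrite decomp_sum; last lia.
change (INR 1) with 1; change (Nat.pred (S n)) with n; rewrite Rminus_diag Rmult_0_r Rmult_0_l Rplus_0_l.
rewrite (sum_eq _ (fun i => bern n i x * (INR (S (S n)) * INR (S n) * x ^ 2))).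
- rewrite -scal_sum bern_sum. rewrite !S_INR. ring.
- move=> i Hi; rewrite /bern.
  rewrite (_ : (S (S n) - S (S i))%nat = (n - i)%nat) //.
  have E : INR (S (S i)) * (INR (S (S i)) - 1) = INR (S (S i)) * INR (S i).
  { rewrite (S_INR (S i)); ring. }
  rewrite E.
  have E2 := C_shift (S n) (S i). have E3 := C_shift n i.
  rewrite (_ : INR (S (S i)) * INR (S i) * (C (S (S n)) (S (S i)) * x ^ S (S i) * (1 - x) ^ (n - i))
     = INR (S i) * (INR (S (S i)) * C (S (S n)) (S (S i))) * x ^ S (S i) * (1 - x) ^ (n - i)); last ring.
  rewrite E2 (_ : INR (S i) * (INR (S (S n)) * C (S n) (S i)) = INR (S (S n)) * (INR (S i) * C (S n) (S i))); last ring.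
  rewrite E3 /=; ring.
Qed.

Lemma sum_scal_l c F N : sum_f_R0 (fun i => c * F i) N = c * sum_f_R0 F N.
Proof. rewrite scal_sum; apply: sum_eq => i _; ring. Qed.

Lemma bern_var n x : (2 <= n)%nat ->
  sum_f_R0 (fun j => (INR j / INR n - x) ^ 2 * bern n j x) n = x * (1 - x) / INR n.
Proof.
move=> Hn.
have Hn0 : 0 < INR n by apply: lt_0_INR; apply/ltP; exact: ltnW.
rewrite (sum_eq _ (fun j => (/ INR n ^ 2) * (INR j * (INR j - 1) * bern n j x)
     + ((/ INR n ^ 2 - 2 * x / INR n) * (INR j * bern n j x) + x ^ 2 * bern n j x))); last first.
{ move=> i _; field; lra. }
rewrite !sum_plus !sum_scal_l bern_m2 // bern_m1; last exact: ltnW.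
rewrite bern_sum; field; lra.
Qed.

Lemma big_abs_le (I : finType) (F : I -> R) :
  Rabs (\big[Rplus/0]_(i : I) F i) <= \big[Rplus/0]_(i : I) Rabs (F i).
Proof.
apply: (big_ind2 (fun x y => Rabs x <= y)).
- rewrite Rabs_R0; lra.
- move=> x1 x2 y1 y2 A B /=; apply: Rle_trans (Rabs_triang _ _) _; lra.
- move=> i _; lra.
Qed.

Lemma big_distrl_R (I : finType) (F : I -> R) a :
  \big[Rplus/0]_(i : I) (F i * a) = (\big[Rplus/0]_(i : I) F i) * a.
Proof. by rewrite big_distrl. Qed.

Lemma big_distrr_R (I : finType) (F : I -> R) a :
  \big[Rplus/0]_(i : I) (a * F i) = a * (\big[Rplus/0]_(i : I) F i).
Proof. by rewrite big_distrr. Qed.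

Lemma big_split_R (I : finType) (F G : I -> R) :
  \big[Rplus/0]_(i : I) (F i + G i) = \big[Rplus/0]_(i : I) F i + \big[Rplus/0]_(i : I) G i.
Proof. by rewrite big_split. Qed.

Lemma big_distrl_ord n (F : 'I_n -> R) a :
  \big[Rplus/0]_(i < n) (F i * a) = (\big[Rplus/0]_(i < n) F i) * a.
Proof. by rewrite big_distrl. Qed.

Lemma bigD1_ord n (F : 'I_n -> R) j :
  \big[Rplus/0]_(i < n) F i = F j + \big[Rplus/0]_(i < n | i != j) F i.
Proof. by rewrite (bigD1 j). Qed.

Lemma big_le (I : finType) (F G : I -> R) : (forall i, F i <= G i) ->
  \big[Rplus/0]_(i : I) F i <= \big[Rplus/0]_(i : I) G i.
Proof.
move=> H; apply: (big_ind2 (fun x y => x <= y)); [lra| move=> * /=; lra | move=> i _; exact: H].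
Qed.

Lemma big_ge0 (I : finType) (F : I -> R) : (forall i, 0 <= F i) ->
  0 <= \big[Rplus/0]_(i : I) F i.
Proof.
move=> H; apply: (big_ind (fun x => 0 <= x)); [lra| move=> * /=; lra | move=> i _; exact: H].
Qed.

Lemma big_prod_ge0 (I : finType) (F : I -> R) : (forall i, 0 <= F i) ->
  0 <= \big[Rmult/1]_(i : I) F i.
Proof.
move=> H; apply: (big_ind (fun x => 0 <= x)); [lra| move=> x y A B /=; exact: Rmult_le_pos | move=> i _; exact: H].
Qed.

Lemma big_const_R n c : \big[Rplus/0]_(i < n) c = INR n * c.
Proof.
rewrite big_const_ord; elim: n => [|n IH] /=; first ring.
rewrite IH; case: n {IH} => [|n] /=; ring.
Qed.

Section Bern.
Variable d : nat.

Definition xc m s := (s + m) / (2 * m).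
Definition grid m n (k : {ffun 'I_d -> 'I_n.+1}) : vec d :=
  fun i => - m + 2 * m * (INR (k i) / INR n).
Definition Wt m n (k : {ffun 'I_d -> 'I_n.+1}) (t : vec d) :=
  \big[Rmult/1]_(i < d) bern n (k i) (xc m (t i)).
Definition Bop m n (f : vec d -> R) (t : vec d) :=
  \big[Rplus/0]_(k : {ffun 'I_d -> 'I_n.+1}) (f (grid m n k) * Wt m n k t).

Lemma Rabs_between x m : Rabs x <= m -> - m <= x <= m.
Proof. unfold Rabs; destruct (Rcase_abs x); lra. Qed.

Lemma xc_01 m s : 0 < m -> Rabs s <= m -> 0 <= xc m s <= 1.
Proof.
move=> Hm /Rabs_between Hs; rewrite /xc; split.
- apply: Rmult_le_pos; [lra|]; apply: Rlt_le; apply: Rinv_0_lt_compat; lra.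
- apply: (Rmult_le_reg_r (2 * m)); [lra|]. rewrite /Rdiv Rmult_assoc Rinv_l; lra.
Qed.

Lemma big_sub (I : finType) (F G : I -> R) :
  \big[Rplus/0]_(i : I) (F i - G i) = \big[Rplus/0]_(i : I) F i - \big[Rplus/0]_(i : I) G i.
Proof.
apply: (big_rec3 (fun a b c => a = b - c)); first ring.
move=> i a b c _ -> /=; ring.
Qed.

Lemma Wt_ge0 m n k t : 0 < m -> inC m t -> 0 <= Wt m n k t.
Proof.
move=> Hm Ht; apply: big_prod_ge0 => i; apply: bern_ge0; exact: xc_01.
Qed.

Lemma Wt_sum m n t : \big[Rplus/0]_(k : {ffun 'I_d -> 'I_n.+1}) Wt m n k t = 1.
Proof.
rewrite /Wt -(@bigA_distr_bigA _ 0 1 Rmult Rplus _ _ (fun i (j : 'I_n.+1) => bern n j (xc m (t i)))).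
apply: big1 => i _. rewrite -(bern_sum n (xc m (t i))) -sum_ord_f. by [].
Qed.

Lemma Wt_var m n t l : (2 <= n)%nat ->
  \big[Rplus/0]_(k : {ffun 'I_d -> 'I_n.+1})
     ((INR (k l) / INR n - xc m (t l)) ^ 2 * Wt m n k t)
  = xc m (t l) * (1 - xc m (t l)) / INR n.
Proof.
move=> Hn.
set F := fun i (j : 'I_n.+1) => if i == l then (INR j / INR n - xc m (t i)) ^ 2 * bern n j (xc m (t i))
                               else bern n j (xc m (t i)).
transitivity (\big[Rplus/0]_(k : {ffun 'I_d -> 'I_n.+1}) \big[Rmult/1]_(i < d) F i (k i)).
{ apply: eq_bigr => k _; rewrite /Wt (bigD1 l) // [in RHS](bigD1 l) //.
  have E : \big[Rmult/1]_(i < d | i != l) F i (k i) = \big[Rmult/1]_(i < d | i != l) bern n (k i) (xc m (t i)).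
  { apply: eq_bigr => i Hi; by rewrite /F (negbTE Hi). }
  rewrite E {1}/F eqxx /=; symmetry; exact: Rmult_assoc. }
rewrite -(@bigA_distr_bigA _ 0 1 Rmult Rplus _ _ F) (bigD1 l) //=.
have R1 : \big[Rmult/1]_(i < d | i != l) \big[Rplus/0]_(j < n.+1) F i j = 1.
{ apply: big1 => i Hi. rewrite /F (negbTE Hi) -(bern_sum n (xc m (t i))) -sum_ord_f. by []. }
rewrite R1 Rmult_1_r /F eqxx -(@bern_var n (xc m (t l)) Hn) -sum_ord_f. by [].
Qed.

Lemma grid_in m n k : 0 < m -> (1 <= n)%nat -> inC m (grid m n k).
Proof.
move=> Hm Hn i; rewrite /grid.
have Hk : (k i <= n)%coq_nat by apply/leP; rewrite -ltnS.
have A := le_INR _ _ Hk. have B := pos_INR (k i).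
have Hn0 : 0 < INR n by apply: lt_0_INR; apply/ltP.
have C : 0 <= INR (k i) / INR n <= 1.
{ split; first by apply: Rmult_le_pos => //; apply: Rlt_le; apply: Rinv_0_lt_compat.
  apply: (Rmult_le_reg_r (INR n)) => //; rewrite /Rdiv Rmult_assoc Rinv_l; lra. }
apply: Rabs_le; nra.
Qed.

Lemma Bop_err f m n M eps del (Hm : 0 < m) (HM : forall t, inC m t -> Rabs (f t) <= M)
  (Hdel : 0 < del) (Heps : 0 < eps)
  (Hu : forall x y, inC m x -> inC m y -> (forall i, Rabs (x i - y i) < del) ->
        Rabs (f x - f y) < eps)
  (Hn : (2 <= n)%nat) t (Ht : inC m t) :
  Rabs (Bop m n f t - f t) <= eps + 2 * M / del ^ 2 * (INR d * (m ^ 2 / INR n)).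
Proof.
have Hn1 : (1 <= n)%nat by exact: ltnW.
have Hn0 : 0 < INR n by apply: lt_0_INR; apply/ltP.
have HM0 : 0 <= M by apply: Rle_trans (HM t Ht); exact: Rabs_pos.
set c := 2 * M / del ^ 2.
have Hc : 0 <= c.
{ apply: Rmult_le_pos; [lra|]; apply: Rlt_le; apply: Rinv_0_lt_compat; apply: pow_lt; lra. }
have E : Bop m n f t - f t = \big[Rplus/0]_(k : {ffun 'I_d -> 'I_n.+1})
          ((f (grid m n k) - f t) * Wt m n k t).
{ have Ef : \big[Rplus/0]_(k : {ffun 'I_d -> 'I_n.+1}) (f t * Wt m n k t) = f t
    by rewrite big_distrr_R Wt_sum Rmult_1_r.
  rewrite -[X in _ - X = _]Ef /Bop -big_sub.
  apply: eq_bigr => k _; ring. }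
rewrite E; apply: Rle_trans (big_abs_le _ _) _.
have T : forall k, Rabs ((f (grid m n k) - f t) * Wt m n k t) <=
   eps * Wt m n k t + c * \big[Rplus/0]_(l < d) ((grid m n k l - t l) ^ 2 * Wt m n k t).
{ move=> k; rewrite Rabs_mult (Rabs_pos_eq (Wt m n k t)); last exact: Wt_ge0.
  rewrite big_distrl_ord -Rmult_assoc -Rmult_plus_distr_r.
  apply: Rmult_le_compat_r; first exact: Wt_ge0.
  have S0 : 0 <= \big[Rplus/0]_(l < d) (grid m n k l - t l) ^ 2
    by apply: big_ge0 => l; apply: pow2_ge_0.
  case: (classic (forall l, Rabs (grid m n k l - t l) < del)) => [Hall|Hn'].
  - have := Hu _ _ (grid_in m n k Hm Hn1) Ht Hall. have := Rmult_le_pos _ _ Hc S0. lra.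
  - have [l Hl] := not_all_ex_not _ _ Hn'.
    have Hl' : del ^ 2 <= (grid m n k l - t l) ^ 2.
    { rewrite -(pow2_abs (grid m n k l - t l)); apply: pow_incr; lra. }
    have S1 : (grid m n k l - t l) ^ 2 <= \big[Rplus/0]_(l < d) (grid m n k l - t l) ^ 2.
    { rewrite (bigD1_ord _ _ l). have : 0 <= \big[Rplus/0]_(i < d | i != l) (grid m n k i - t i) ^ 2.
      { apply: (big_ind (fun x => 0 <= x)); [lra| move=> * /=; lra | move=> i _; exact: pow2_ge_0]. }
      lra. }
    have S2 : 2 * M <= c * \big[Rplus/0]_(l < d) (grid m n k l - t l) ^ 2.
    { apply: Rle_trans (_ : c * del ^ 2 <= _).
      - rewrite /c; right; field; lra.
      - apply: Rmult_le_compat_l => //; lra. }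
    have := HM _ (grid_in m n k Hm Hn1). have := HM t Ht.
    have : Rabs (f (grid m n k) - f t) <= Rabs (f (grid m n k)) + Rabs (f t).
    { rewrite /Rminus -(Rabs_Ropp (f t)); apply: Rabs_triang. }
    lra. }
apply: Rle_trans (big_le _ _ _ T) _.
rewrite big_split_R big_distrr_R Wt_sum Rmult_1_r big_distrr_R.
apply: Rplus_le_compat_l; apply: Rmult_le_compat_l => //.
rewrite exchange_big /= -big_const_R; apply: big_le => l.
rewrite (eq_bigr (fun k : {ffun 'I_d -> 'I_n.+1} => (4 * m ^ 2) *
        ((INR (k l) / INR n - xc m (t l)) ^ 2 * Wt m n k t))); last first.
{ move=> k _; rewrite /grid /xc; field; lra. }
rewrite big_distrr_R Wt_var //.
have [X0 X1] := xc_01 _ _ Hm (Ht l).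
have : xc m (t l) * (1 - xc m (t l)) <= / 4 by have := pow2_ge_0 (xc m (t l) - /2); nra.
move=> Q. apply: (Rmult_le_reg_r (INR n)) => //.
rewrite (_ : 4 * m ^ 2 * (xc m (t l) * (1 - xc m (t l)) / INR n) * INR n
   = 4 * m ^ 2 * (xc m (t l) * (1 - xc m (t l)))); last by field; lra.
rewrite (_ : m * (m * 1) / INR n * INR n = m ^ 2); last by field; lra.
have := pow2_ge_0 m. nra.
Qed.

End Bern.
Section Fam.
Variable d : nat.
Variable h : vec d -> R.

Lemma in_K_scal c f : in_K h f -> in_K h (fun t => c * f t).
Proof.
case=> K [al [om [ga [HK [Hom [Hga Hf]]]]]].
exists K, (fun k => c * al k), om, ga; do 3 (split => //).
move=> tau; rewrite Hf -sumR_scal; apply: sumR_ext => i _; ring.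
Qed.

Lemma in_K_add f g : in_K h f -> in_K h g -> in_K h (fun t => f t + g t).
Proof.
case=> K1 [a1 [o1 [g1 [HK1 [Ho1 [Hg1 Hf]]]]]].
case=> K2 [a2 [o2 [g2 [HK2 [Ho2 [Hg2 Hg]]]]]].
exists (K1 + K2)%nat, (fun k => if (k < K1)%nat then a1 k else a2 (k - K1)%nat),
  (fun k => if (k < K1)%nat then o1 k else o2 (k - K1)%nat),
  (fun k => if (k < K1)%nat then g1 k else g2 (k - K1)%nat).
split; first by rewrite (leq_trans HK1) // leq_addr.
split; first by move=> k i; case: ifP.
split; first by move=> k i; case: ifP.
move=> tau; rewrite Hf Hg sumR_cat; congr (_ + _); apply: sumR_ext => i Hi.
- by rewrite Hi.
- have -> : (i + K1 < K1)%nat = false by rewrite ltnNge leq_addl.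
  by rewrite addnK.
Qed.


Definition appr (f : vec d -> R) := forall m eps, 0 < m -> 0 < eps ->
  exists g, in_K h g /\ forall t, inC m t -> Rabs (f t - g t) < eps.

Lemma appr_add f g : appr f -> appr g -> appr (fun t => f t + g t).
Proof.
move=> Hf Hg m e Hm He.
have [f1 [K1 H1]] := Hf m (e/2) Hm ltac:(lra).
have [g1 [K2 H2]] := Hg m (e/2) Hm ltac:(lra).
exists (fun t => f1 t + g1 t); split; first exact: in_K_add.
move=> t Ht; have := H1 t Ht; have := H2 t Ht.
move=> A B; rewrite (_ : f t + g t - (f1 t + g1 t) = f t - f1 t + (g t - g1 t)); last ring.
apply: Rle_lt_trans (Rabs_triang (f t - f1 t) (g t - g1 t)) _; lra.
Qed.

Lemma appr_scal c f : appr f -> appr (fun t => c * f t).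
Proof.
move=> Hf m e Hm He.
have Hc : 0 < Rabs c + 1 by have := Rabs_pos c; lra.
have [f1 [K1 H1]] := Hf m (e / (Rabs c + 1)) Hm ltac:(apply: Rdiv_lt_0_compat; lra).
exists (fun t => c * f1 t); split; first exact: in_K_scal.
move=> t Ht; have := H1 t Ht => A.
rewrite (_ : c * f t - c * f1 t = c * (f t - f1 t)); last ring.
rewrite Rabs_mult.
apply: (Rle_lt_trans _ ((Rabs c + 1) * Rabs (f t - f1 t))).
  apply: Rmult_le_compat_r; [exact: Rabs_pos| lra].
rewrite Rmult_comm; apply: (Rlt_le_trans _ (e / (Rabs c + 1) * (Rabs c + 1))).
  apply: Rmult_lt_compat_r => //.
by right; field; lra.
Qed.

Lemma appr_lim f : (forall m eps, 0 < m -> 0 < eps -> exists g, appr g /\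
   forall t, inC m t -> Rabs (f t - g t) < eps) -> appr f.
Proof.
move=> H m e Hm He.
have [g [Hg H1]] := H m (e/2) Hm ltac:(lra).
have [g1 [K1 H2]] := Hg m (e/2) Hm ltac:(lra).
exists g1; split => // t Ht; have := H1 t Ht; have := H2 t Ht => A B.
rewrite (_ : f t - g1 t = f t - g t + (g t - g1 t)); last ring.
apply: Rle_lt_trans (Rabs_triang (f t - g t) (g t - g1 t)) _; lra.
Qed.


Lemma dot_lin (a b : vec d) c (t : vec d) : dot (fun i => a i + c * b i) t = dot a t + c * dot b t.
Proof. rewrite /dot big_distrr -big_split; apply: eq_bigr => i _ /=; ring. Qed.

Lemma dot_scal c (a t : vec d) : dot (fun i => c * a i) t = c * dot a t.
Proof. rewrite /dot big_distrr; apply: eq_bigr => i _ /=; ring. Qed.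

Lemma dot_unit (i : 'I_d) (t : vec d) : dot (fun l => if l == i then 1 else 0) t = t i.
Proof.
rewrite /dot (bigD1 i) //= eqxx big1 => [|l /negbTE -> ]; ring.
Qed.

Lemma dot_e2 (i j : 'I_d) (t : vec d) :
  dot (fun l => (if l == i then 1 else 0) + 1 * (if l == j then 1 else 0)) t = t i + t j.
Proof. by rewrite dot_lin !dot_unit Rmult_1_l. Qed.

Lemma dot_bound (a t : vec d) m : 0 <= m -> inC m t ->
  Rabs (dot a t) <= m * \big[Rplus/0]_(i < d) Rabs (a i).
Proof.
move=> Hm Ht; rewrite /dot big_distrr.
apply: (big_ind2 (fun x y => Rabs x <= y)).
- rewrite Rabs_R0; lra.
- move=> x1 x2 y1 y2 A B /=; apply: Rle_trans (Rabs_triang _ _) _; lra.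
- move=> i _ /=; rewrite Rabs_mult; have := Ht i; have := Rabs_pos (a i); nra.
Qed.

Lemma sumabs_ge0 (a : vec d) : 0 <= \big[Rplus/0]_(i < d) Rabs (a i).
Proof.
apply: (big_ind (fun x => 0 <= x)) => //; [lra | move=> *; lra | move=> i _; exact: Rabs_pos].
Qed.

Definition Mc (P : vec d -> R) :=
  (forall m, 0 < m -> exists B, forall t, inC m t -> Rabs (P t) <= B) /\
  forall w : vec d, (forall i, 0 <= w i) -> appr (fun t => P t * cos (dot w t)).

Lemma Mc_ext P Q : (forall t, P t = Q t) -> Mc P -> Mc Q.
Proof. by move=> H; rewrite (functional_extensionality P Q H). Qed.

Lemma Mc_add P Q : Mc P -> Mc Q -> Mc (fun t => P t + Q t).
Proof.
move=> [BP AP] [BQ AQ]; split.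
- move=> m Hm; have [B1 H1] := BP m Hm; have [B2 H2] := BQ m Hm.
  exists (B1 + B2) => t Ht; have := H1 t Ht; have := H2 t Ht => A B.
  apply: Rle_trans (Rabs_triang _ _) _; lra.
- move=> w Hw; have := appr_add _ _ (AP w Hw) (AQ w Hw).
  congr appr; apply: functional_extensionality => t /=; ring.
Qed.

Lemma Mc_scal c P : Mc P -> Mc (fun t => c * P t).
Proof.
move=> [BP AP]; split.
- move=> m Hm; have [B1 H1] := BP m Hm.
  exists (Rabs c * B1) => t Ht; rewrite Rabs_mult; apply: Rmult_le_compat_l;
  [exact: Rabs_pos | exact: H1].
- move=> w Hw; have := appr_scal c _ (AP w Hw).
  congr appr; apply: functional_extensionality => t /=; ring.
Qed.

Lemma Mc_sq P (e : vec d) : Mc P -> (forall i, 0 <= e i) ->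
  Mc (fun t => P t * (dot e t) ^ 2).
Proof.
move=> [BP AP] He; split.
- move=> m Hm; have [B1 H1] := BP m Hm.
  set X := m * \big[Rplus/0]_(i < d) Rabs (e i).
  exists (B1 * X ^ 2) => t Ht.
  have A := H1 t Ht. have C := dot_bound e t m (Rlt_le _ _ Hm) Ht.
  have D := Rabs_pos (dot e t). have E := Rabs_pos (P t).
  rewrite Rabs_mult -RPow_abs; apply: Rmult_le_compat => //.
  + exact: pow_le.
  + by apply: pow_incr.
- move=> w Hw; apply: appr_lim => m eps Hm Heps.
  have [B0 H1] := BP m Hm.
  set B := Rmax B0 0.
  have HB : 0 <= B by apply: Rmax_r.
  set X := m * \big[Rplus/0]_(i < d) Rabs (e i).
  have HX : 0 <= X by apply: Rmult_le_pos; [lra|exact: sumabs_ge0].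
  set Y := (B + 1) * (X ^ 3 + X ^ 4 + 1).
  have HY : 0 < Y.
  { rewrite /Y; apply: Rmult_lt_0_compat; [lra|].
    have := pow_le X 3 HX; have := pow_le X 4 HX; lra. }
  set tt := Rmin 1 (eps / (2 * Y)).
  have Ht0 : 0 < tt.
  { rewrite /tt; apply: Rmin_pos; [lra|apply: Rdiv_lt_0_compat; lra]. }
  have Ht1 : tt <= 1 by apply: Rmin_l.
  have Ht2 : tt <= eps / (2 * Y) by apply: Rmin_r.
  set w1 := fun i => w i + tt * e i.
  set w2 := fun i => w i + (2 * tt) * e i.
  have Hw1 : forall i, 0 <= w1 i.
  { move=> i; rewrite /w1; have := Hw i; have := He i; nra. }
  have Hw2 : forall i, 0 <= w2 i.
  { move=> i; rewrite /w2; have := Hw i; have := He i; nra. }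
  exists (fun t => (- / tt ^ 2) * ((P t * cos (dot w2 t))
           + (-2) * (P t * cos (dot w1 t)) + P t * cos (dot w t))).
  split.
  { apply: appr_scal; apply: appr_add; [apply: appr_add|]; last exact: AP.
    - exact: AP. - apply: appr_scal; exact: AP. }
  move=> t Ht.
  rewrite /w1 /w2 !dot_lin.
  set a := dot w t. set de := dot e t.
  have -> : P t * de ^ 2 * cos a -
     - / tt ^ 2 * (P t * cos (a + 2 * tt * de) + -2 * (P t * cos (a + tt * de)) + P t * cos a)
     = P t / tt ^ 2 * (cos (a + 2 * (tt * de)) - 2 * cos (a + tt * de) + cos a
          + (tt * de) ^ 2 * cos a).
  { rewrite (_ : 2 * (tt * de) = 2 * tt * de); last ring. field; lra. }
  have T := trig2 a (tt * de).
  have Hde : Rabs de <= X by apply: dot_bound => //; lra.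
  have HP : Rabs (P t) <= B by apply: Rle_trans (H1 t Ht) (Rmax_l _ _).
  rewrite Rabs_mult.
  have E1 : Rabs (P t / tt ^ 2) = Rabs (P t) / tt ^ 2.
  { rewrite /Rdiv Rabs_mult Rabs_inv -RPow_abs (Rabs_pos_eq tt) //; lra. }
  rewrite E1.
  have Z := Rabs_pos de.
  have E2 : Rabs (tt * de) ^ 3 + (tt * de) ^ 4 <= tt ^ 3 * X ^ 3 + tt ^ 4 * X ^ 4.
  { rewrite Rabs_mult (Rabs_pos_eq tt); last lra.
    have := pow_incr _ _ 3 (conj Z Hde); have := pow_incr _ _ 4 (conj Z Hde).
    rewrite (_ : (tt * de) ^ 4 = tt ^ 4 * Rabs de ^ 4); last first.
    { rewrite (_ : Rabs de ^ 4 = (Rabs de ^ 2) ^ 2); last ring. rewrite pow2_abs; ring. }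
    have := pow_le tt 3 (Rlt_le _ _ Ht0); have := pow_le tt 4 (Rlt_le _ _ Ht0).
    move=> ? ? ? ?. rewrite Rpow_mult_distr. nra. }
  have E3 : Rabs (P t) / tt ^ 2 * (tt ^ 3 * X ^ 3 + tt ^ 4 * X ^ 4)
           = Rabs (P t) * tt * (X ^ 3 + tt * X ^ 4) by field; lra.
  apply: Rle_lt_trans (_ : Rabs (P t) / tt ^ 2 * (tt ^ 3 * X ^ 3 + tt ^ 4 * X ^ 4) < _).
  { apply: Rmult_le_compat_l.
    - apply: Rmult_le_pos; [exact: Rabs_pos|]. apply: Rlt_le; apply: Rinv_0_lt_compat; apply: pow_lt; lra.
    - exact: Rle_trans T E2. }
  rewrite E3.
  have X3 := pow_le X 3 HX. have X4 := pow_le X 4 HX.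
  have K1 : X ^ 3 + tt * X ^ 4 <= X ^ 3 + X ^ 4 + 1 by nra.
  have K2 : Rabs (P t) * tt * (X ^ 3 + tt * X ^ 4) <= Y * tt.
  { rewrite /Y; have H0 := Rabs_pos (P t).
    have S0 : 0 <= X ^ 3 + tt * X ^ 4 by nra.
    apply Rle_trans with ((B + 1) * tt * (X ^ 3 + tt * X ^ 4)).
    { apply Rmult_le_compat_r; [lra|]. apply Rmult_le_compat_r; lra. }
    replace ((B + 1) * (X ^ 3 + X ^ 4 + 1) * tt) with ((B + 1) * tt * (X ^ 3 + X ^ 4 + 1)) by ring.
    apply Rmult_le_compat_l; [nra|lra]. }
  have K3 : Y * tt <= eps / 2.
  { have : Y * (eps / (2 * Y)) = eps / 2 by field; lra.
    move=> <-; apply: Rmult_le_compat_l; lra. }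
  lra.
Qed.

Lemma Mc_mul2 P (i j : 'I_d) : Mc P -> Mc (fun t => P t * (t i * t j)).
Proof.
move=> HP.
set ei := fun l : 'I_d => if l == i then 1 else 0.
set ej := fun l : 'I_d => if l == j then 1 else 0.
set eij := fun l : 'I_d => (if l == i then 1 else 0) + 1 * (if l == j then 1 else 0).
have Hi : forall l, 0 <= ei l by move=> l; rewrite /ei; case: ifP => _; lra.
have Hj : forall l, 0 <= ej l by move=> l; rewrite /ej; case: ifP => _; lra.
have Hij : forall l, 0 <= eij l by move=> l; rewrite /eij; do 2 case: ifP => _; lra.
have A := Mc_scal (/2) _ (Mc_sq _ _ HP Hij).
have B := Mc_scal (- /2) _ (Mc_sq _ _ HP Hi).
have C := Mc_scal (- /2) _ (Mc_sq _ _ HP Hj).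
apply: (Mc_ext _ _ _ (Mc_add _ _ (Mc_add _ _ A B) C)) => t /=.
rewrite /eij dot_e2 /ei /ej !dot_unit; field.
Qed.


Lemma dot0 (t : vec d) : dot (fun _ => 0) t = 0.
Proof. rewrite /dot big1 // => i _; ring. Qed.

Lemma Mc_one (Hc : cont_Rd h) (Hp : 0 < h (fun _ => 0)) : Mc (fun _ => 1).
Proof.
split.
- move=> m Hm; exists 1 => t _; rewrite Rabs_pos_eq; lra.
- move=> w Hw m eps Hm He.
  set h0 := h (fun _ => 0).
  have Hp0 : 0 < h0 by exact: Hp.
  have [del [Hdel Hc0]] := Hc (fun _ => 0) (eps * h0) (Rmult_lt_0_compat _ _ He Hp).
  set c := del / (2 * m).
  have Hcp : 0 < c by apply: Rdiv_lt_0_compat; lra.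
  have HPI := PI_RGT_0.
  exists (fun t => sumR 1 (fun k => (/ h0) * h (hadamard t (fun _ => c))
        * cos (2 * PI * dot (fun i => / (2 * PI) * w i) t))).
  split.
  { exists 1%nat, (fun _ => / h0), (fun _ i => / (2 * PI) * w i), (fun _ _ => c).
    split => //. split.
    - move=> k i; apply: Rmult_le_pos => //; apply: Rlt_le; apply: Rinv_0_lt_compat; lra.
    - split => //. }
  move=> t Ht; rewrite sumR1 dot_scal.
  rewrite (_ : 2 * PI * (/ (2 * PI) * dot w t) = dot w t); last by field; lra.
  set y := hadamard t (fun _ => c).
  have Hy : Rabs (h y - h0) < eps * h0.
  { apply: Hc0 => i; rewrite /y /hadamard Rminus_0_r Rabs_mult (Rabs_pos_eq c); last lra.
    have := Ht i; have := Rabs_pos (t i) => A B.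
    apply: (Rle_lt_trans _ (m * c)); first by apply: Rmult_le_compat_r; lra.
    rewrite /c; apply: (Rlt_le_trans _ del); [|lra].
    rewrite (_ : m * (del / (2 * m)) = del / 2); [lra|field; lra]. }
  rewrite (_ : 1 * cos (dot w t) - / h0 * h y * cos (dot w t)
             = cos (dot w t) * ((h0 - h y) / h0)); last by field; lra.
  rewrite Rabs_mult /Rdiv Rabs_mult Rabs_inv (Rabs_pos_eq h0); last lra.
  have B := COS_bound (dot w t).
  have C : Rabs (cos (dot w t)) <= 1 by apply: Rabs_le; lra.
  rewrite -Rabs_Ropp Ropp_minus_distr in Hy.
  have D : Rabs (h0 - h y) * / h0 < eps.
  { apply: (Rmult_lt_reg_r h0) => //. rewrite Rmult_assoc Rinv_l; lra. }
  have := Rabs_pos (cos (dot w t)).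
  have : 0 <= Rabs (h0 - h y) * / h0.
  { apply: Rmult_le_pos; [exact: Rabs_pos|]. apply: Rlt_le; exact: Rinv_0_lt_compat. }
  nra.
Qed.

Definition ev (P : vec d -> R) t := (P t + P (vopp t)) / 2.
Definition od (P : vec d -> R) t := (P t - P (vopp t)) / 2.
Definition Nc P := Mc (ev P) /\ forall j, Mc (fun t => t j * od P t).

Lemma Nc_const c : Mc (fun _ => 1) -> Nc (fun _ => c).
Proof.
move=> H1; split.
- apply: (Mc_ext _ _ _ (Mc_scal c _ H1)) => t; rewrite /ev; field.
- move=> j; apply: (Mc_ext _ _ _ (Mc_scal 0 _ H1)) => t; rewrite /od; field.
Qed.

Lemma Nc_add P Q : Nc P -> Nc Q -> Nc (fun t => P t + Q t).
Proof.
move=> [A1 A2] [B1 B2]; split.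
- apply: (Mc_ext _ _ _ (Mc_add _ _ A1 B1)) => t; rewrite /ev; field.
- move=> j; apply: (Mc_ext _ _ _ (Mc_add _ _ (A2 j) (B2 j))) => t; rewrite /od; field.
Qed.

Lemma Nc_scal c P : Nc P -> Nc (fun t => c * P t).
Proof.
move=> [A1 A2]; split.
- apply: (Mc_ext _ _ _ (Mc_scal c _ A1)) => t; rewrite /ev; field.
- move=> j; apply: (Mc_ext _ _ _ (Mc_scal c _ (A2 j))) => t; rewrite /od; field.
Qed.

Lemma Nc_mulx P i : Nc P -> Nc (fun t => P t * t i).
Proof.
move=> [A1 A2]; split.
- apply: (Mc_ext _ _ _ (A2 i)) => t; rewrite /ev /od /vopp; field.
- move=> j; apply: (Mc_ext _ _ _ (Mc_mul2 _ i j A1)) => t; rewrite /ev /od /vopp; field.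
Qed.

Lemma Nc_aff P i a b : Nc P -> Nc (fun t => P t * (a * t i + b)).
Proof.
move=> H; have := Nc_add _ _ (Nc_scal a _ (Nc_mulx _ i H)) (Nc_scal b _ H).
congr Nc; apply: functional_extensionality => t; ring.
Qed.

Lemma Nc_pow P i a b n : Nc P -> Nc (fun t => P t * (a * t i + b) ^ n).
Proof.
move=> H; elim: n => [|n IH] /=.
- congr Nc: H; apply: functional_extensionality => t; ring.
- have := Nc_aff _ i a b IH; congr Nc; apply: functional_extensionality => t; ring.
Qed.

Lemma Nc_appr P : Nc P -> appr (ev P).
Proof.
move=> [[_ A] _]; have := A (fun _ => 0) (fun _ => Rle_refl 0).
congr appr; apply: functional_extensionality => t; rewrite dot0 cos_0; ring.
Qed.


Lemma Nc_Bop m n f : Mc (fun _ => 1) -> Nc (Bop d m n f).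
Proof.
move=> H1.
have Exc : forall s, xc m s = / (2 * m) * s + m * / (2 * m) by move=> s; rewrite /xc /Rdiv; ring.
have Exc1 : forall s, 1 - xc m s = (- / (2 * m)) * s + (1 - m * / (2 * m)) by move=> s; rewrite Exc; ring.
have Hprod : forall (k : {ffun 'I_d -> 'I_n.+1}) (r : seq 'I_d),
    Nc (fun t => \big[Rmult/1]_(i <- r) bern n (k i) (xc m (t i))).
{ move=> k; elim => [|i r IH].
  - have := Nc_const 1 H1; congr Nc; apply: functional_extensionality => t; by rewrite big_nil.
  - have := Nc_scal (C n (k i)) _ (Nc_pow _ i (- / (2 * m)) (1 - m * / (2 * m)) (n - k i) (Nc_pow _ i (/ (2 * m)) (m * / (2 * m)) (k i) IH)).
    congr Nc; apply: functional_extensionality => t.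
    rewrite big_cons /bern Exc1 Exc /=; ring. }
have Hsum : forall r : seq {ffun 'I_d -> 'I_n.+1},
    Nc (fun t => \big[Rplus/0]_(k <- r) (f (grid d m n k) * Wt d m n k t)).
{ elim => [|k r IH].
  - have := Nc_const 0 H1; congr Nc; apply: functional_extensionality => t; by rewrite big_nil.
  - have := Nc_add _ _ (Nc_scal (f (grid d m n k)) _ (Hprod k (index_enum _))) IH.
    congr Nc; apply: functional_extensionality => t; by rewrite big_cons. }
exact: Hsum.
Qed.

End Fam.

Lemma nat_big r : exists N : nat, r < INR N.
Proof.
have Hp : 0 < / (Rabs r + 1) by apply: Rinv_0_lt_compat; have := Rabs_pos r; lra.
have [N [H1 H2]] := archimed_cor1 _ Hp.
exists N. have HN : 0 < INR N by apply: lt_0_INR.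
destruct (Rle_dec (INR N) (Rabs r + 1)) as [Hle|Hlt].
- have := Rinv_le_contravar _ _ HN Hle. have := Rle_abs r. lra.
- have := Rle_abs r. lra.
Qed.

Lemma inv_small eps : 0 < eps -> exists N : nat, forall n, (N <= n)%coq_nat -> / INR (S n) < eps.
Proof.
move=> He; have [N [H1 H2]] := archimed_cor1 _ He.
exists N => n Hn.
have A : 0 < INR N by apply: lt_0_INR.
have B : INR N <= INR (S n) by apply: le_INR; lia.
have := Rinv_le_contravar _ _ A B. lra.
Qed.

Lemma incr_ge (p : nat -> nat) : (forall n, (p n < p (S n))%nat) -> forall n, (n <= p n)%coq_nat.
Proof.
move=> H; elim => [|n IH]; first lia.
have := H n => /ltP; lia.
Qed.

Lemma incr_mono (p : nat -> nat) : (forall n, (p n < p (S n))%nat) ->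
  forall a b, (a <= b)%coq_nat -> (p a <= p b)%coq_nat.
Proof.
move=> H a b; elim: b => [|b IH] Hab.
- have -> : a = 0%nat by lia. lia.
- case: (Nat.eq_dec a (S b)) => [->|Hne]; first lia.
  have := H b => /ltP; have := IH ltac:(lia); lia.
Qed.

Lemma Un_cv_sub u l (p : nat -> nat) : (forall n, (p n < p (S n))%nat) ->
  Un_cv u l -> Un_cv (fun n => u (p n)) l.
Proof.
move=> Hp Hu eps He; have [N HN] := Hu eps He.
exists N => n Hn; apply: HN; have := incr_ge _ Hp n; lia.
Qed.

Lemma subseq_1d (u : nat -> R) m : (forall n, Rabs (u n) <= m) ->
  exists p : nat -> nat, (forall n, (p n < p (S n))%nat) /\ exists l, Un_cv (fun n => u (p n)) l.
Proof.
move=> Hb.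
have [l Hl] := Bolzano_Weierstrass u (fun c => - m <= c <= m) (compact_P3 _ _)
  (fun n => Rabs_between _ _ (Hb n)).
have G : forall j N : nat, exists q : nat, (N <= q)%coq_nat /\ Rabs (u q - l) < / INR (S j).
{ move=> j N.
  have Hj : 0 < / INR (S j) by apply: Rinv_0_lt_compat; apply: lt_0_INR; lia.
  have [q [Hq Hq2]] := Hl (disc l (mkposreal _ Hj)) N
       (ex_intro _ (mkposreal _ Hj) (fun y Hy => Hy)).
  by exists q. }
pose g j N := proj1_sig (constructive_indefinite_description _ (G j N)).
have Hg : forall j N, (N <= g j N)%coq_nat /\ Rabs (u (g j N) - l) < / INR (S j).
{ move=> j N; rewrite /g; case: constructive_indefinite_description => q //=. }
pose p := fix p n := match n with O => g O O | S n' => g (S n') (S (p n')) end.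
exists p; split.
- move=> n /=; apply/ltP; have := (Hg (S n) (S (p n))).1; lia.
- exists l => eps He.
  have [N HN] := inv_small _ He.
  exists N => n Hn; rewrite /R_dist.
  have A : Rabs (u (p n) - l) < / INR (S n).
  { case: n {Hn} => [|n] /=; [exact: (Hg O O).2 | exact: (Hg (S n) (S (p n))).2]. }
  have := HN n Hn; lra.
Qed.

Section Compact.
Variable d : nat.

Lemma subseq_dd (x : nat -> vec d) m : (forall n, inC m (x n)) ->
  exists p : nat -> nat, (forall n, (p n < p (S n))%nat) /\
    exists l : vec d, forall i, Un_cv (fun n => x (p n) i) (l i).
Proof.
move=> Hx.
suff : forall j : nat, exists p : nat -> nat, (forall n, (p n < p (S n))%nat) /\
    forall i : 'I_d, (i < j)%nat -> exists li, Un_cv (fun n => x (p n) i) li.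
{ move=> /(_ d) [p [Hp Hc]].
  have [l Hl] := fin_all_exists (fun i : 'I_d => Hc i (ltn_ord i)).
  by exists p; split => //; exists l. }
elim => [|j [p [Hp Hc]]].
- by exists (fun n : nat => n); split => // n; apply/ltP; lia.
- case: (ltnP j d) => Hj.
  + set i0 := Ordinal Hj.
    have [q [Hq [l0 Hl0]]] := subseq_1d (fun n => x (p n) i0) m (fun n => Hx (p n) i0).
    exists (fun n => p (q n)); split.
    * move=> n; apply/ltP.
      have := incr_mono _ Hp (q n) (q (S n)) ltac:(have := Hq n => /ltP; lia).
      have := Hp (q n) => /ltP. have := Hq n => /ltP. move=> A B C.
      have := incr_mono _ Hp (S (q n)) (q (S n)) ltac:(lia). lia.
    * move=> i; rewrite ltnS leq_eqVlt => /orP [/eqP Ei|Hi].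
      -- exists l0; have -> : i = i0 by apply: val_inj.
         exact: Hl0.
      -- have [li Hli] := Hc i Hi; exists li.
         exact: (Un_cv_sub (fun n => x (p n) i) li q Hq Hli).
  + exists p; split => // i Hi; apply: Hc; exact: (leq_trans (ltn_ord i) Hj).
Qed.

Lemma fin_eventually (P : 'I_d -> nat -> Prop) :
  (forall i, exists N, forall n, (N <= n)%coq_nat -> P i n) ->
  exists N, forall i n, (N <= n)%coq_nat -> P i n.
Proof.
move=> H; have [Nf HN] := fin_all_exists H.
exists (\max_i Nf i) => i n Hn; apply: HN.
have := @leq_bigmax _ Nf i. move/leP; lia.
Qed.

Lemma cv_coords (x : nat -> vec d) (l : vec d) : (forall i, Un_cv (fun n => x n i) (l i)) ->
  forall del, 0 < del -> exists N, forall n, (N <= n)%coq_nat -> forall i, Rabs (x n i - l i) < del.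
Proof.
move=> Hc del Hd.
have [N HN] := fin_eventually (fun i n => Rabs (x n i - l i) < del)
  (fun i => let: ex_intro N HN := Hc i del Hd in ex_intro _ N (fun n Hn => HN n Hn)).
by exists N => n Hn i; apply: HN.
Qed.

Lemma unif_cont (f : vec d -> R) (Hf : cont_Rd f) m eps (He : 0 < eps) :
  exists del, 0 < del /\ forall x y, inC m x -> inC m y ->
    (forall i, Rabs (x i - y i) < del) -> Rabs (f x - f y) < eps.
Proof.
apply: NNPP => H.
have G : forall n : nat, exists xy : vec d * vec d, inC m xy.1 /\ inC m xy.2 /\
   (forall i, Rabs (xy.1 i - xy.2 i) < / INR (S n)) /\ ~ Rabs (f xy.1 - f xy.2) < eps.
{ move=> n; apply: NNPP => Hn; apply: H.
  exists (/ INR (S n)); split; first by apply: Rinv_0_lt_compat; apply: lt_0_INR; lia.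
  move=> x y Hx Hy Hxy; apply: NNPP => Hne; apply: Hn; exists (x, y); by []. }
pose X n := proj1_sig (constructive_indefinite_description _ (G n)).
have HX : forall n, inC m (X n).1 /\ inC m (X n).2 /\
   (forall i, Rabs ((X n).1 i - (X n).2 i) < / INR (S n)) /\ ~ Rabs (f (X n).1 - f (X n).2) < eps.
{ move=> n; rewrite /X; case: constructive_indefinite_description => //. }
have [p [Hp [l Hl]]] := subseq_dd (fun n => (X n).1) m (fun n => (HX n).1).
have [del [Hdel Hcont]] := Hf l (eps / 2) ltac:(lra).
have [N1 HN1] := cv_coords _ _ Hl (del / 2) ltac:(lra).
have [N2 HN2] := inv_small (del / 2) ltac:(lra).
set n := Nat.max N1 N2.
have [_ [_ [Hc Hne]]] := HX (p n).
have A : forall i, Rabs ((X (p n)).1 i - l i) < del.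
{ move=> i; have := HN1 n ltac:(lia) i; lra. }
have B : forall i, Rabs ((X (p n)).2 i - l i) < del.
{ move=> i; have := HN1 n ltac:(lia) i; have := Hc i.
  have := HN2 (p n) ltac:(have := incr_ge _ Hp n; lia).
  move=> C D E.
  have := Rabs_triang ((X (p n)).2 i - (X (p n)).1 i) ((X (p n)).1 i - l i).
  rewrite (_ : (X (p n)).2 i - (X (p n)).1 i + ((X (p n)).1 i - l i) = (X (p n)).2 i - l i); last ring.
  rewrite -Rabs_Ropp Ropp_minus_distr in D. lra. }
apply: Hne.
have C1 := Hcont _ A. have C2 := Hcont _ B.
have := Rabs_triang (f (X (p n)).1 - f l) (f l - f (X (p n)).2).
rewrite (_ : f (X (p n)).1 - f l + (f l - f (X (p n)).2) = f (X (p n)).1 - f (X (p n)).2); last ring.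
rewrite -(Rabs_Ropp (f l - f (X (p n)).2)) Ropp_minus_distr. lra.
Qed.

Lemma bounded (f : vec d -> R) (Hf : cont_Rd f) m :
  exists M, forall t, inC m t -> Rabs (f t) <= M.
Proof.
apply: NNPP => H.
have G : forall n : nat, exists t : vec d, inC m t /\ INR n < Rabs (f t).
{ move=> n; apply: NNPP => Hn; apply: H; exists (INR n) => t Ht.
  apply: Rnot_lt_le => Hlt; apply: Hn; by exists t. }
pose X n := proj1_sig (constructive_indefinite_description _ (G n)).
have HX : forall n, inC m (X n) /\ INR n < Rabs (f (X n)).
{ move=> n; rewrite /X; case: constructive_indefinite_description => //. }
have [p [Hp [l Hl]]] := subseq_dd X m (fun n => (HX n).1).
have [del [Hdel Hcont]] := Hf l 1 ltac:(lra).
have [N1 HN1] := cv_coords _ _ Hl del Hdel.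
have [N2 HN2] := nat_big (Rabs (f l) + 1).
set n := Nat.max N1 N2.
have A := Hcont _ (HN1 n ltac:(lia)).
have B := (HX (p n)).2.
have C : INR N2 <= INR (p n) by apply: le_INR; have := incr_ge _ Hp n; lia.
have := Rabs_triang_inv (f (X (p n))) (f l). lra.
Qed.

End Compact.

Theorem theorem3 (d : nat) (Hd : (1 <= d)%nat) (h : vec d -> R)
  (Hcont : cont_Rd h) (Hint : integrable_Rd h) (Hpsd : psd_fun h)
  (Hpos : forall tau, 0 < h tau) :
  forall k : vec d -> R, cont_Rd k -> psd_fun k ->
  exists kn : nat -> vec d -> R,
    (forall n, in_K h (kn n)) /\
    (forall tau, Un_cv (fun n => kn n tau) (k tau)).
Proof.
move=> k Hk [Hev _].
have H1 : Mc d h (fun _ => 1) := Mc_one d h Hcont (Hpos _).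
have Ak : appr d h k.
{ apply: appr_lim => m eps Hm He.
  have [M HM] := bounded d k Hk m.
  have [del [Hdel Hu]] := unif_cont d k Hk m (eps / 4) ltac:(lra).
  set Z := 2 * M / del ^ 2 * (INR d * m ^ 2).
  have [N HN] := nat_big (Z * 4 / eps).
  set n := (N + 2)%nat.
  have Hn2 : (2 <= n)%nat by rewrite /n addn2.
  have HnN : INR N <= INR n by apply: le_INR; apply/leP; rewrite /n; exact: leq_addr.
  have Hn0 : 0 < INR n by apply: lt_0_INR; apply/ltP; rewrite /n addn2.
  have Herr : 2 * M / del ^ 2 * (INR d * (m ^ 2 / INR n)) < eps / 4.
  { rewrite (_ : 2 * M / del ^ 2 * (INR d * (m ^ 2 / INR n)) = Z / INR n); last first.
    { rewrite /Z; field; split; lra. }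
    apply: (Rmult_lt_reg_r (INR n)) => //.
    rewrite (_ : Z / INR n * INR n = Z); last by field; lra.
    have : Z * 4 / eps < INR n by lra.
    move=> Q. have : Z * 4 / eps * (eps / 4) < INR n * (eps / 4) by apply: Rmult_lt_compat_r; lra.
    rewrite (_ : Z * 4 / eps * (eps / 4) = Z); last by field; lra. lra. }
  exists (ev d (Bop d m n k)); split.
  { exact: (Nc_appr d h _ (Nc_Bop d h m n k H1)). }
  move=> t Ht.
  have Hvt : inC m (vopp t) by move=> i; rewrite /vopp Rabs_Ropp; exact: Ht.
  have E1 := Bop_err d k m n M (eps / 4) del Hm HM Hdel ltac:(lra) Hu Hn2 t Ht.
  have E2 := Bop_err d k m n M (eps / 4) del Hm HM Hdel ltac:(lra) Hu Hn2 (vopp t) Hvt.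
  rewrite /ev.
  rewrite (_ : k t - (Bop d m n k t + Bop d m n k (vopp t)) / 2
     = - ((Bop d m n k t - k t) + (Bop d m n k (vopp t) - k (vopp t))) / 2); last first.
  { rewrite Hev; field. }
  rewrite /Rdiv Rabs_mult Rabs_Ropp Rabs_inv Rabs_R2.
  have := Rabs_triang (Bop d m n k t - k t) (Bop d m n k (vopp t) - k (vopp t)).
  lra. }
have G : forall n : nat, exists g, in_K h g /\
   forall t, inC (INR n + 1) t -> Rabs (k t - g t) < / INR (S n).
{ move=> n; apply: Ak.
  - have := pos_INR n; lra.
  - apply: Rinv_0_lt_compat; apply: lt_0_INR; lia. }
pose kn n := proj1_sig (constructive_indefinite_description _ (G n)).
have Hkn : forall n, in_K h (kn n) /\
   forall t, inC (INR n + 1) t -> Rabs (k t - kn n t) < / INR (S n).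
{ move=> n; rewrite /kn; case: constructive_indefinite_description => //. }
exists kn; split; first by move=> n; exact: (Hkn n).1.
move=> tau eps He.
set T := \big[Rplus/0]_(i < d) Rabs (tau i).
have [N0 HN0] := nat_big T.
have [N1 HN1] := inv_small eps He.
exists (Nat.max N0 N1) => n Hn; rewrite /R_dist.
have Hin : inC (INR n + 1) tau.
{ move=> i.
  have A : Rabs (tau i) <= T.
  { rewrite /T (bigD1_ord _ _ i).
    have : 0 <= \big[Rplus/0]_(j < d | j != i) Rabs (tau j).
    { apply: (big_ind (fun x => 0 <= x)); [lra| move=> * /=; lra | move=> j _; exact: Rabs_pos]. }
    lra. }
  have : INR N0 <= INR n by apply: le_INR; lia.
  lra. }
have := (Hkn n).2 tau Hin. have := HN1 n ltac:(lia).
rewrite -Rabs_Ropp Ropp_minus_distr. lra.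
Qed.
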